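(* Consider the nonlinear program described in the context and let $\alpha>0$. If MFCQ holds at $x^*\in\mathcal{C}$, then (i) $\mathcal{G}_\alpha(x^* )=0$ if and only if $x^*\in X_{KKT}$; and (ii) if $x^*\in X_{KKT}$, then $\Lambda_\alpha(x^* )$ equals the set of Lagrange multipliers of the program at $x^*$.
   Context: Let $f:\mathbb{R}^n\to\mathbb{R}$, $g:\mathbb{R}^n\to\mathbb{R}^m$, $h:\mathbb{R}^n\to\mathbb{R}^k$ be continuously differentiable; consider minimize $f(x)$ subject to $g(x)\le0$, $h(x)=0$ with feasible set $\mathcal{C}$; $I_0(x)=\{i:g_i(x)=0\}$. MFCQ at $x$: $\{\nabla h_j(x)\}_{j=1}^k$ linearly independent and some $\xi$ has $\nabla h_j(x)^\top\xi=0$ for all $j$ and $\nabla g_i(x)^\top\xi<0$ for $i\in I_0(x)$. $(u^*,v^* )\in\mathbb{R}^m\times\mathbb{R}^k$ are Lagrange multipliers at $x^*$ if $\nabla f(x^* )+\frac{\partial g}{\partial x}(x^* )^\top u^*+\frac{\partial h}{\partial x}(x^* )^\top v^*=0$, $g(x^* )\le0$, $h(x^* )=0$, $u^*\ge0$, $(u^* )^\top g(x^* )=0$; $X_{KKT}$ is the set of points admitting Lagrange multipliers. With $G=\frac{\partial g}{\partial x}(x)$, $H=\frac{\partial h}{\partial x}(x)$: $\mathcal{G}_\alpha(x)$ is the unique minimizer over $\xi$ of $\frac12\|\xi+\nabla f(x)\|^2$ subject to $G\xi\le-\alpha g(x)$, $H\xi=-\alpha h(x)$; $\Lambda_\alpha(x)$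 is the set of $(u,v)\in\mathbb{R}^m_{\ge0}\times\mathbb{R}^k$ for which some $\xi$ satisfies $\xi+\nabla f(x)+G^\top u+H^\top v=0$, $G\xi+\alpha g(x)\le0$, $H\xi+\alpha h(x)=0$, $u\ge0$, $u^\top(G\xi+\alpha g(x))=0$. *)

(* Defs.v *)
From HB Require Import structures.
From mathcomp Require Import all_boot all_order all_algebra.
From mathcomp Require Import all_classical all_reals all_analysis.
Set Implicit Arguments. Unset Strict Implicit. Unset Printing Implicit Defensive.
Import Order.TTheory GRing.Theory Num.Theory.
Import numFieldNormedType.Exports.
Local Open Scope classical_set_scope.
Local Open Scope ring_scope.

Section NLP.
Variables (R : realType) (n m k : nat).

Definition grad (f : 'rV[R]_n -> R) (x : 'rV[R]_n) : 'rV[R]_n :=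
  \row_(j < n) 'D_(delta_mx 0 j) f x.

Definition C1 (f : 'rV[R]_n -> R) : Prop :=
  (forall x, differentiable f x) /\
  (forall j : 'I_n, continuous (fun x => 'D_(delta_mx 0 j) f x)).

Definition dotv (p : nat) (a b : 'rV[R]_p) : R := \sum_(j < p) a 0 j * b 0 j.
Definition sqnorm (p : nat) (a : 'rV[R]_p) : R := \sum_(j < p) a 0 j ^+ 2.

Variables (f : 'rV[R]_n -> R) (g : 'I_m -> 'rV[R]_n -> R)
          (h : 'I_k -> 'rV[R]_n -> R).

Definition gvec (x : 'rV[R]_n) : 'rV[R]_m := \row_(i < m) g i x.
Definition hvec (x : 'rV[R]_n) : 'rV[R]_k := \row_(j < k) h j x.

Definition Gjac (x : 'rV[R]_n) : 'M[R]_(m, n) := \matrix_(i < m, l < n) grad (g i) x 0 l.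
Definition Hjac (x : 'rV[R]_n) : 'M[R]_(k, n) := \matrix_(j < k, l < n) grad (h j) x 0 l.

Definition feasible (x : 'rV[R]_n) : Prop :=
  (forall i, g i x <= 0) /\ (forall j, h j x = 0).

Definition active (x : 'rV[R]_n) : set 'I_m := [set i | g i x = 0].

Definition MFCQ (x : 'rV[R]_n) : Prop :=
  row_free (Hjac x) /\
  exists xi : 'rV[R]_n,
    (forall j, dotv (grad (h j) x) xi = 0) /\
    (forall i, i \in active x -> dotv (grad (g i) x) xi < 0).

(* (u, v) are Lagrange multipliers at x  (G^T u is written u *m G in row form) *)
Definition lagrange_mult (x : 'rV[R]_n) (uv : 'rV[R]_m * 'rV[R]_k) : Prop :=
  [/\ grad f x + uv.1 *m Gjac x + uv.2 *m Hjac x = 0,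
      (forall i, g i x <= 0),
      (forall j, h j x = 0),
      (forall i, 0 <= uv.1 0 i) &
      dotv uv.1 (gvec x) = 0].

Definition multipliers (x : 'rV[R]_n) : set ('rV[R]_m * 'rV[R]_k) :=
  [set uv | lagrange_mult x uv].

Definition X_KKT : set 'rV[R]_n := [set x | exists uv, lagrange_mult x uv].

Definition qp_feasible (alpha : R) (x xi : 'rV[R]_n) : Prop :=
  (forall i, dotv (grad (g i) x) xi <= - alpha * g i x) /\
  (forall j, dotv (grad (h j) x) xi = - alpha * h j x).

Definition qp_minimizer (alpha : R) (x xi : 'rV[R]_n) : Prop :=
  qp_feasible alpha x xi /\
  forall z, qp_feasible alpha x z ->
    sqnorm (xi + grad f x) / 2 <= sqnorm (z + grad f x) / 2.

(* G_alpha(x): the (unique) minimizer of the QP (chosen by classical choice;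
   it exists and is unique whenever the QP is feasible, e.g. for x in C) *)
Definition Galpha (alpha : R) (x : 'rV[R]_n) : 'rV[R]_n :=
  xget 0 [set xi | qp_minimizer alpha x xi].

Definition Lambda (alpha : R) (x : 'rV[R]_n) : set ('rV[R]_m * 'rV[R]_k) :=
  [set uv : 'rV[R]_m * 'rV[R]_k | (forall i, 0 <= uv.1 0 i) /\
    exists xi : 'rV[R]_n,
      [/\ xi + grad f x + uv.1 *m Gjac x + uv.2 *m Hjac x = 0,
          (forall i, dotv (grad (g i) x) xi + alpha * g i x <= 0),
          (forall j, dotv (grad (h j) x) xi + alpha * h j x = 0),
          (forall i, 0 <= uv.1 0 i) &
          dotv uv.1 (\row_(i < m) (dotv (grad (g i) x) xi + alpha * g i x)) = 0]].

End NLP.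

(* Main.v *)
Require Import Defs.
From HB Require Import structures.
From mathcomp Require Import all_boot all_order all_algebra.
From mathcomp Require Import all_classical all_reals all_analysis.
From mathcomp.algebra_tactics Require Import ring lra.
Import Order.TTheory GRing.Theory Num.Theory.
Import numFieldNormedType.Exports.
Local Open Scope classical_set_scope.
Local Open Scope ring_scope.

Section LinAlg.
Variables (R : realType) (n : nat).
Implicit Types (a b c x y z : 'rV[R]_n).

Lemma dotvC a b : dotv a b = dotv b a.
Proof. by apply: eq_bigr => j _; rewrite mulrC. Qed.

Lemma dotvDl a b c : dotv (a + b) c = dotv a c + dotv b c.
Proof. by rewrite /dotv -big_split; apply: eq_bigr => j _; rewrite !mxE mulrDl. Qed.

Lemma dotvDr a b c : dotv c (a + b) = dotv c a + dotv c b.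
Proof. by rewrite dotvC dotvDl !(dotvC c). Qed.

Lemma dotvZl (t : R) a b : dotv (t *: a) b = t * dotv a b.
Proof. by rewrite /dotv mulr_sumr; apply: eq_bigr => j _; rewrite !mxE mulrA. Qed.

Lemma dotvZr (t : R) a b : dotv b (t *: a) = t * dotv b a.
Proof. by rewrite dotvC dotvZl dotvC. Qed.

Lemma dotvNl a b : dotv (- a) b = - dotv a b.
Proof. by rewrite -scaleN1r dotvZl mulN1r. Qed.

Lemma dotvNr a b : dotv b (- a) = - dotv b a.
Proof. by rewrite dotvC dotvNl dotvC. Qed.

Lemma dotvBl a b c : dotv (a - b) c = dotv a c - dotv b c.
Proof. by rewrite dotvDl dotvNl. Qed.

Lemma dotvBr a b c : dotv c (a - b) = dotv c a - dotv c b.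
Proof. by rewrite dotvDr dotvNr. Qed.

Lemma dotv0l a : dotv 0 a = 0.
Proof. by rewrite /dotv big1 // => j _; rewrite mxE mul0r. Qed.

Lemma dotv0r a : dotv a 0 = 0.
Proof. by rewrite dotvC dotv0l. Qed.

Lemma dotv_suml (I : finType) (F : I -> 'rV[R]_n) b :
  dotv (\sum_i F i) b = \sum_i dotv (F i) b.
Proof.
rewrite /dotv exchange_big /=; apply: eq_bigr => j _.
by rewrite summxE mulr_suml.
Qed.

Lemma sqnormE a : sqnorm a = dotv a a.
Proof. by apply: eq_bigr => j _; rewrite expr2. Qed.

Lemma sqnorm_ge0 a : 0 <= sqnorm a.
Proof. by apply: sumr_ge0 => j _; rewrite sqr_ge0. Qed.

Lemma sqnorm_eq0 a : sqnorm a <= 0 -> a = 0.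
Proof.
move=> h.
have h0 : sqnorm a = 0 by apply/eqP; rewrite eq_le h sqnorm_ge0.
apply/rowP => j; rewrite mxE.
move/eqP: h0; rewrite /sqnorm psumr_eq0; last by move=> i _; rewrite sqr_ge0.
by move/allP/(_ j (mem_index_enum _)); rewrite /= sqrf_eq0 => /eqP.
Qed.

Lemma sqnormD a b : sqnorm (a + b) = sqnorm a + 2 * dotv a b + sqnorm b.
Proof.
rewrite !sqnormE dotvDl !dotvDr (dotvC b a); ring.
Qed.


Lemma farkas_ord (p : nat) : forall (a : 'I_p -> 'rV[R]_n) b,
  (forall x, (forall i, 0 <= dotv (a i) x) -> 0 <= dotv b x) ->
  exists y : 'I_p -> R, (forall i, 0 <= y i) /\ b = \sum_i y i *: a i.
Proof.
elim: p => [|p IH] a b H.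
  exists (fun _ => 0); split => //; rewrite big_ord0.
  have := H (- b) (fun i => match i with Ordinal _ q => False_ind _ (notF q) end).
  rewrite dotvNr -sqnormE oppr_ge0; exact: sqnorm_eq0.
have lw : forall j : 'I_p, lift ord_max j = widen_ord (leqnSn p) j.
  by move=> j; apply: val_inj; rewrite /= /bump leqNgt ltn_ord.
set am := a ord_max.
set a' := fun i : 'I_p => a (widen_ord (leqnSn p) i).
have ext : forall (y' : 'I_p -> R) ym,
    \sum_(i < p.+1) (match unlift ord_max i with Some j => y' j | None => ym end) *: a i
    = \sum_(i < p) y' i *: a' i + ym *: am.
  move=> y' ym; rewrite big_ord_recr /= unlift_none; congr (_ + _).
  by apply: eq_bigr => i _; rewrite -lw liftK lw.
have Hall : forall x, (forall j, 0 <= dotv (a' j) x) -> 0 <= dotv am x ->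
    forall i, 0 <= dotv (a i) x.
  by move=> x h1 h2 i; case: (unliftP ord_max i) => [j ->|->] //; rewrite lw; exact: h1.
case: (pselect (forall x, (forall i, 0 <= dotv (a' i) x) -> 0 <= dotv b x)) => [H'|nH'].
  have [y' [y'0 ->]] := IH a' b H'.
  exists (fun i => match unlift ord_max i with Some j => y' j | None => 0 end).
  split; first by move=> i; case: unlift.
  by rewrite ext scale0r addr0.
have [x0 [Hx0 bx0]] : exists x0, (forall i, 0 <= dotv (a' i) x0) /\ dotv b x0 < 0.
  move/existsNP: nH' => [x0 /not_implyP [h1 h2]]; exists x0; split => //.
  by rewrite ltNge; apply/negP.
have D0 : dotv am x0 < 0.
  rewrite ltNge; apply/negP => h.
  by have := H x0 (Hall x0 Hx0 h); rewrite leNgt bx0.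
set D := dotv am x0.
have Dn0 : D != 0 by rewrite lt_eqF.
set gam := fun i => dotv (a' i) x0 / D.
set beta := dotv b x0 / D.
set a'' := fun i => a' i - gam i *: am.
set b'' := b - beta *: am.
have H'' : forall x, (forall i, 0 <= dotv (a'' i) x) -> 0 <= dotv b'' x.
  move=> x hx.
  set x' := x - (dotv am x / D) *: x0.
  have e1 : forall v, dotv v x' = dotv v x - dotv am x / D * dotv v x0.
    by move=> v; rewrite dotvBr dotvZr.
  have Hx' : forall i, 0 <= dotv (a i) x'.
    apply: Hall.
      move=> j; have := hx j; rewrite /a'' dotvBl dotvZl e1 /gam.
      suff -> : dotv (a' j) x - dotv (a' j) x0 / D * dotv am x =
                dotv (a' j) x - dotv am x / D * dotv (a' j) x0 by [].
      by ring.
    by rewrite e1 divfK // subrr.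
  have := H x' Hx'.
  rewrite e1 /b'' dotvBl dotvZl /beta.
  suff -> : dotv b x - dotv b x0 / D * dotv am x =
            dotv b x - dotv am x / D * dotv b x0 by [].
  by ring.
have [y' [y'0 eb]] := IH a'' b'' H''.
exists (fun i => match unlift ord_max i with Some j => y' j | None => beta - \sum_j y' j * gam j end).
split.
  move=> i; case: unlift => [j|]; first exact: y'0.
  have -> : beta - \sum_j y' j * gam j = (dotv b x0 - \sum_j y' j * dotv (a' j) x0) / D.
    rewrite mulrBl /beta; congr (_ - _); rewrite mulr_suml; apply: eq_bigr => j _; by rewrite /gam mulrA.
  rewrite -mulrNN -invrN; apply: divr_ge0; last by rewrite oppr_ge0 ltW.
  rewrite oppr_ge0; apply: ltW; apply: (le_lt_trans _ bx0).
  rewrite gerBl; apply: sumr_ge0 => j _; exact: mulr_ge0.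
rewrite ext.
have -> : b = b'' + beta *: am by rewrite /b'' subrK.
rewrite eb /a''.
under eq_bigr do rewrite scalerBr scalerA.
rewrite sumrB scalerBl -scaler_suml -addrA; congr (_ + _); by rewrite addrC.
Qed.


Lemma farkas (I : finType) (a : I -> 'rV[R]_n) b :
  (forall x, (forall i, 0 <= dotv (a i) x) -> 0 <= dotv b x) ->
  exists y : I -> R, (forall i, 0 <= y i) /\ b = \sum_i y i *: a i.
Proof.
move=> H.
have [y [y0 ->]] := @farkas_ord #|I| (fun j => a (enum_val j)) b
  (fun x hx => H x (fun i => eq_ind _ (fun t => 0 <= dotv (a t) x) (hx (enum_rank i)) _ (enum_rankK i))).
exists (fun i => y (enum_rank i)); split => //.
rewrite [RHS](reindex (fun j : 'I_#|I| => enum_val j)) /=; last first.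
  by exists enum_rank => t _; [exact: enum_valK | exact: enum_rankK].
by apply: eq_bigr => j _; rewrite enum_valK.
Qed.

End LinAlg.



Lemma dotv_sumr (R : realType) (n : nat) (I : finType) (F : I -> 'rV[R]_n) b :
  dotv b (\sum_i F i) = \sum_i dotv b (F i).
Proof. by rewrite dotvC dotv_suml; apply: eq_bigr => i _; rewrite dotvC. Qed.

Section NLP2.
Variables (R : realType) (n m k : nat) (f : 'rV[R]_n -> R)
  (g : 'I_m -> 'rV[R]_n -> R) (h : 'I_k -> 'rV[R]_n -> R) (alpha : R) (x : 'rV[R]_n).

Lemma mulGE (u : 'rV[R]_m) : u *m Gjac g x = \sum_i u 0 i *: grad (g i) x.
Proof. by apply/rowP => l; rewrite !mxE summxE; apply: eq_bigr => i _; rewrite !mxE. Qed.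

Lemma mulHE (v : 'rV[R]_k) : v *m Hjac h x = \sum_j v 0 j *: grad (h j) x.
Proof. by apply/rowP => l; rewrite !mxE summxE; apply: eq_bigr => i _; rewrite !mxE. Qed.

Lemma qp_kkt_bound (xi : 'rV[R]_n) (u : 'rV[R]_m) (v : 'rV[R]_k) :
  (forall i, 0 <= u 0 i) ->
  xi + grad f x + u *m Gjac g x + v *m Hjac h x = 0 ->
  qp_feasible g h alpha x xi ->
  dotv u (\row_(i < m) (dotv (grad (g i) x) xi + alpha * g i x)) = 0 ->
  forall z, qp_feasible g h alpha x z ->
  sqnorm (xi + grad f x) + sqnorm (z - xi) <= sqnorm (z + grad f x).
Proof.
move=> u0 E fxi cs z fz.
have -> : z + grad f x = (z - xi) + (xi + grad f x) by rewrite addrA subrK.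
rewrite (@sqnormD _ _ (z - xi)).
suff : 0 <= dotv (z - xi) (xi + grad f x) by move=> HH; lra.
have -> : xi + grad f x = - (u *m Gjac g x + v *m Hjac h x).
  by apply/eqP; rewrite -subr_eq0 opprK addrA; apply/eqP.
rewrite dotvNr dotvDr mulGE mulHE !dotv_sumr.
have Hs : \sum_j dotv (z - xi) (v 0 j *: grad (h j) x) = 0.
  apply: big1 => j _; rewrite dotvZr dotvC dotvBr (proj2 fz) (proj2 fxi) subrr.
  by rewrite mulr0.
have Gs : \sum_i dotv (z - xi) (u 0 i *: grad (g i) x) <= 0.
  have -> : \sum_i dotv (z - xi) (u 0 i *: grad (g i) x) =
    \sum_i u 0 i * (dotv (grad (g i) x) z + alpha * g i x) -
    \sum_i u 0 i * (dotv (grad (g i) x) xi + alpha * g i x).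
    by rewrite -sumrB; apply: eq_bigr => i _; rewrite dotvZr dotvC dotvBr; ring.
  have -> : \sum_i u 0 i * (dotv (grad (g i) x) xi + alpha * g i x) = 0.
    by apply: (eq_trans _ cs); apply: eq_bigr => i _; rewrite mxE.
  rewrite subr0; apply: sumr_le0 => i _; apply: mulr_ge0_le0 => //.
  by have := (proj1 fz) i; lra.
rewrite Hs addr0 oppr_ge0 //.
Qed.


Lemma closed_forall (T : topologicalType) (I : Type) (F : I -> set T) :
  (forall i, closed (F i)) -> closed [set z | forall i, F i z].
Proof.
move=> cF.
have -> : [set z | forall i, F i z] = \bigcap_(i in setT) F i.
  by apply/seteqP; split => z /= Hz i //; apply: Hz.
exact: closed_bigI.
Qed.

Lemma closed_le_fun (T : topologicalType) (phi : T -> R) r :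
  continuous phi -> closed [set z | phi z <= r].
Proof. move=> cp; apply: (@preimage_closed _ _ phi [set y | y <= r]); [by move=> z _; exact: cp | exact: closed_le]. Qed.

Lemma closed_eq_fun (T : topologicalType) (phi : T -> R) r :
  continuous phi -> closed [set z | phi z = r].
Proof. move=> cp; apply: (@preimage_closed _ _ phi [set y | y = r]); [by move=> z _; exact: cp | exact: closed_eq]. Qed.

Lemma cont_sum (p : nat) (F : 'I_p -> 'rV[R]_n -> R) :
  (forall j, continuous (F j)) -> continuous (fun z => \sum_(j < p) F j z).
Proof.
move=> HF; apply: continuous_big => //; exact: add_continuous.
Qed.

Lemma dotv_cont (a : 'rV[R]_n) : continuous (fun z : 'rV[R]_n => dotv a z).
Proof.
apply: cont_sum => j z; apply: continuousM; first exact: cst_continuous.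
exact: coord_continuous.
Qed.

Lemma sqnorm_cont (c : 'rV[R]_n) : continuous (fun z : 'rV[R]_n => sqnorm (z + c)).
Proof.
have -> : (fun z : 'rV[R]_n => sqnorm (z + c)) =
  (fun z => \sum_(j < n) (z 0 j + c 0 j) * (z 0 j + c 0 j)).
  by apply: funext => z; apply: eq_bigr => j _; rewrite mxE expr2.
apply: cont_sum => j z.
have cj : {for z, continuous (fun z : 'rV[R]_n => z 0 j + c 0 j)}.
  apply: continuousD; first exact: coord_continuous.
  exact: cst_continuous.
exact: (@continuousM _ _ (fun z : 'rV[R]_n => z 0 j + c 0 j) (fun z : 'rV[R]_n => z 0 j + c 0 j) z cj cj).
Qed.

Lemma coord_sq_le (a : 'rV[R]_n) j : a 0 j ^+ 2 <= sqnorm a.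
Proof.
rewrite /sqnorm (bigD1 j) //= lerDl; apply: sumr_ge0 => i _; exact: sqr_ge0.
Qed.

Lemma abs_le_sq (w : R) : `|w| <= 1 + w ^+ 2.
Proof.
rewrite -(real_normK (num_real w)); have := normr_ge0 w; set t := `|w|; nra.
Qed.

Lemma qp_exists : feasible g h x -> 0 <= alpha ->
  exists xi, qp_minimizer f g h alpha x xi.
Proof.
move=> [gx hx] a0.
set c := grad f x.
have f0 : qp_feasible g h alpha x 0.
  split => [i|j]; rewrite dotv0r; last by rewrite hx mulr0.
  by rewrite mulNr oppr_ge0 mulr_ge0_le0.
set A := [set z | qp_feasible g h alpha x z /\ sqnorm (z + c) <= sqnorm c].
have clA : closed A.
  apply: closedI; last exact: closed_le_fun (sqnorm_cont c).
  apply: closedI; apply: closed_forall => i.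
    exact: closed_le_fun (dotv_cont _).
  exact: closed_eq_fun (dotv_cont _).
have bA : bounded_set A.
  exists (2 + 2 * sqnorm c); split; first exact: num_real.
  move=> M hM z [_ Az].
  rewrite /Num.norm /= mx_normrE; apply: bigmax_le => [|[i j] _ /=].
    by apply: le_trans (ltW hM); have := @sqnorm_ge0 _ _ c; lra.
  rewrite (ord1 i); apply: le_trans (ltW hM).
  have e : z 0 j = (z + c) 0 j - c 0 j by rewrite mxE addrK.
  rewrite e; apply: le_trans (ler_normB _ _) _.
  have := abs_le_sq ((z + c) 0 j); have := abs_le_sq (c 0 j).
  have := @coord_sq_le (z + c) j; have := @coord_sq_le c j.
  lra.
have A0 : A !=set0 by exists 0; split => //; rewrite add0r.
have cA : {within A, continuous (fun z : 'rV[R]_n => sqnorm (z + c))}.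
  by apply: continuous_subspaceT; exact: sqnorm_cont.
have [xi Axi minxi] := EVT_min_rV A0 (bounded_closed_compact bA clA) cA.
move: Axi; rewrite inE => -[fxi xic].
exists xi; split => // z fz.
suff : sqnorm (xi + c) <= sqnorm (z + c) by lra.
case: (leP (sqnorm (z + c)) (sqnorm c)) => hz.
  by apply: minxi; rewrite inE.
by apply: le_trans xic (ltW hz).
Qed.


Lemma first_order : feasible g h x -> 0 < alpha ->
  qp_minimizer f g h alpha x 0 ->
  forall d, (forall i, g i x = 0 -> dotv (grad (g i) x) d <= 0) ->
  (forall j, dotv (grad (h j) x) d = 0) -> 0 <= dotv (grad f x) d.
Proof.
move=> [gx hx] a0 [_ minz] d Hg Hh.
set c := grad f x.
rewrite leNgt; apply/negP => cd.
set S := \sum_i `|dotv (grad (g i) x) d| / (alpha * `|g i x|).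
have S0 : 0 <= S.
  by apply: sumr_ge0 => i _; apply: divr_ge0 => //; apply: mulr_ge0 => //; exact: ltW.
have sd0 := @sqnorm_ge0 _ _ d.
set t := Order.min (1 / (1 + S)) (- dotv c d / (1 + sqnorm d)).
have t0 : 0 < t.
  rewrite lt_min; apply/andP; split; apply: divr_gt0; lra.
have t1 : t * (1 + S) <= 1.
  by rewrite -ler_pdivlMr; [rewrite ge_min lexx | lra].
have t2 : t * (1 + sqnorm d) <= - dotv c d.
  by rewrite -ler_pdivlMr; [rewrite ge_min lexx orbT | lra].
have fz : qp_feasible g h alpha x (t *: d).
  split => [i|j]; rewrite dotvZr; last by rewrite (Hh j) mulr0 hx mulr0.
  case: (eqVneq (g i x) 0) => gi.
    by rewrite gi mulr0; apply: mulr_ge0_le0 (ltW t0) (Hg i gi).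
  have gneg : g i x < 0 by rewrite lt_neqAle gi gx.
  set w := dotv (grad (g i) x) d.
  have q0 : 0 < alpha * `|g i x| by apply: mulr_gt0 => //; rewrite normr_gt0.
  have wS : `|w| / (alpha * `|g i x|) <= S.
    rewrite /S (bigD1 i) //= lerDl; apply: sumr_ge0 => l _.
    by apply: divr_ge0 => //; apply: mulr_ge0 => //; exact: ltW.
  move: wS; rewrite ler_pdivrMr // (ltr0_norm gneg) => wS.
  have ww := ler_norm w.
  have h1 : t * w <= t * `|w| by rewrite ler_wpM2l // ltW.
  have h2 : t * `|w| <= t * (S * (alpha * - g i x)) by rewrite ler_wpM2l // ltW.
  have h3 : t * (S * (alpha * - g i x)) <= alpha * - g i x.
    have : 0 < alpha * - g i x by apply: mulr_gt0 => //; lra.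
    nra.
  lra.
have := minz _ fz.
rewrite add0r (@sqnormD _ _ (t *: d)) (@sqnormE _ _ (t *: d)) !dotvZl ?dotvZr -(@sqnormE _ _ d).
move=> H.
have key : t * sqnorm d + 2 * dotv d c < 0.
  rewrite dotvC; lra.
have : t * (t * sqnorm d + 2 * dotv d c) < 0 by rewrite pmulr_rlt0.
lra.
Qed.

Lemma kkt_of_min0 : feasible g h x -> 0 < alpha ->
  qp_minimizer f g h alpha x 0 -> X_KKT f g h x.
Proof.
move=> fx a0 m0.
pose I := ('I_m + ('I_k + 'I_k))%type.
pose gen : I -> 'rV[R]_n := fun s => match s with
  | inl i => if g i x == 0 then - grad (g i) x else 0
  | inr (inl j) => grad (h j) x
  | inr (inr j) => - grad (h j) x end.
have HF : forall d, (forall s, 0 <= dotv (gen s) d) -> 0 <= dotv (grad f x) d.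
  move=> d hd; apply: first_order => //.
    by move=> i gi; have := hd (inl i); rewrite /= gi eqxx dotvNl oppr_ge0.
  move=> j; have := hd (inr (inl j)); have := hd (inr (inr j)); rewrite /= dotvNl.
  move=> h1 h2; apply/eqP; rewrite eq_le; apply/andP; split; lra.
have [y [y0 ey]] := @farkas _ _ ('I_m + ('I_k + 'I_k))%type gen (grad f x) HF.
set u := \row_i (if g i x == 0 then y (inl i) else 0).
set v := \row_j (y (inr (inr j)) - y (inr (inl j))).
exists (u, v); split => /=.
- rewrite mulGE mulHE ey big_sumType /= big_sumType /=.
  have E1 : \sum_i y (inl i) *: gen (inl i) = - \sum_i u 0 i *: grad (g i) x.
    rewrite -sumrN; apply: eq_bigr => i _; rewrite mxE /=.
    by case: eqP => _; [rewrite scalerN | rewrite scaler0 scale0r oppr0].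
  have E2 : \sum_j y (inr (inl j)) *: gen (inr (inl j)) +
            \sum_j y (inr (inr j)) *: gen (inr (inr j)) = - \sum_j v 0 j *: grad (h j) x.
    rewrite -big_split -sumrN; apply: eq_bigr => j _; rewrite mxE /=.
    by rewrite scalerN scalerBl opprB.
  rewrite E1 E2.
  set A := \sum_i _; set B := \sum_j _.
  by rewrite -addrA -opprD addNr.
- exact: (proj1 fx).
- exact: (proj2 fx).
- by move=> i; rewrite mxE; case: eqP.
- apply: big1 => i _; rewrite !mxE; case: eqP => [->|]; by rewrite ?mulr0 ?mul0r.
Qed.


Lemma row_cs0 (u : 'rV[R]_m) :
  dotv u (\row_(i < m) (dotv (grad (g i) x) 0 + alpha * g i x)) =
  alpha * dotv u (gvec g x).
Proof.
have -> : \row_(i < m) (dotv (grad (g i) x) 0 + alpha * g i x) = alpha *: gvec g x.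
  by apply/rowP => i; rewrite !mxE dotv0r add0r.
by rewrite dotvZr.
Qed.

End NLP2.

Lemma sqnormN (R : realType) n (a : 'rV[R]_n) : sqnorm (- a) = sqnorm a.
Proof. by rewrite !sqnormE dotvNl dotvNr opprK. Qed.

Theorem mainTheorem7 (R : realType) (n m k : nat)
  (f : 'rV[R]_n -> R) (g : 'I_m -> 'rV[R]_n -> R) (h : 'I_k -> 'rV[R]_n -> R)
  (alpha : R) (xstar : 'rV[R]_n) :
  C1 f -> (forall i, C1 (g i)) -> (forall j, C1 (h j)) ->
  0 < alpha ->
  feasible g h xstar ->
  MFCQ g h xstar ->
  (Galpha f g h alpha xstar = 0 <-> X_KKT f g h xstar) /\
  (X_KKT f g h xstar -> Lambda f g h alpha xstar = multipliers f g h xstar).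
Proof.
move=> _ _ _ a0 fx _.
have [gx hx] := fx.
set c := grad f xstar.
have f0 : qp_feasible g h alpha xstar 0.
  split => [i|j]; rewrite dotv0r; last by rewrite hx mulr0.
  by rewrite mulNr oppr_ge0 mulr_ge0_le0 // ltW.
have kkt_bound : forall uv, lagrange_mult f g h xstar uv ->
    forall z, qp_feasible g h alpha xstar z -> sqnorm c + sqnorm z <= sqnorm (z + c).
  move=> [u v] [E _ _ u0 cs] z fz.
  have E' : 0 + c + u *m Gjac g xstar + v *m Hjac h xstar = 0 by rewrite add0r.
  have cs' : dotv u (\row_(i < m) (dotv (grad (g i) xstar) 0 + alpha * g i xstar)) = 0.
    by rewrite row_cs0 /= cs mulr0.
  have := @qp_kkt_bound R n m k f g h alpha xstar 0 u v u0 E' f0 cs' z fz.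
  by rewrite add0r subr0.
have unique0 : X_KKT f g h xstar ->
    forall z, qp_minimizer f g h alpha xstar z -> z = 0.
  move=> [uv Huv] z [fz mz].
  have := kkt_bound uv Huv z fz; have := mz 0 f0; rewrite add0r => h1 h2.
  apply: sqnorm_eq0; lra.
have min0 : X_KKT f g h xstar -> qp_minimizer f g h alpha xstar 0.
  move=> [uv Huv]; split => // z fz.
  have := kkt_bound uv Huv z fz; have := @sqnorm_ge0 _ _ z; rewrite add0r; lra.
split.
  split.
    move=> G0.
    have [xi mxi] := @qp_exists R n m k f g h alpha xstar fx (ltW a0).
    have H := @xgetPex _ 0 [set xi | qp_minimizer f g h alpha xstar xi] (ex_intro _ xi mxi).
    change (qp_minimizer f g h alpha xstar (Galpha f g h alpha xstar)) in H.
    rewrite G0 in H.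
    exact: (@kkt_of_min0 R n m k f g h alpha xstar fx a0 H).
  move=> K; rewrite /Galpha; apply: xget_unique; first exact: min0.
  by move=> y; exact: unique0.
move=> K; apply/seteqP; split => [[u v] /= [u0 [xi [E fxi fxh _ cs]]] | [u v] /= Huv].
  have fxi' : qp_feasible g h alpha xstar xi.
    by split => [i|j]; [have := fxi i; lra | have := fxh j; lra].
  have b1 := @qp_kkt_bound R n m k f g h alpha xstar xi u v u0 E fxi' cs 0 f0.
  have [uv Huv] := K.
  have b2 := kkt_bound uv Huv xi fxi'.
  move: b1; rewrite sub0r sqnormN add0r => b1.
  have xi0 : xi = 0 by apply: sqnorm_eq0; lra.
  subst xi.
  split => //=.
  - by move: E; rewrite add0r.
  - have : alpha * dotv u (gvec g xstar) = 0 by rewrite -row_cs0.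
    by move/eqP; rewrite mulf_eq0 gt_eqF //= => /eqP.
have [E _ _ u0 cs] := Huv.
split => //; exists 0; split => //.
- by rewrite add0r.
- by move=> i; rewrite dotv0r add0r mulr_ge0_le0 // ltW.
- by move=> j; rewrite dotv0r add0r hx mulr0.
- by rewrite row_cs0 /= cs mulr0.
Qed.
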